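(* Let $n\geq 2$ and let $B$ be a subgroup of $P\Sigma_n$. If the homomorphism $\tau_1^{(B)}:gr^1(B)=B^{ab}\to IA_n^{ab}$ (induced by the inclusion $B\subseteq IA_n$) is injective, then $\mathcal{A}_n(2)\cap B=\Gamma_2(B)$.
   Context: $F_n$ is the free group on $x_1,\dots,x_n$; $\Gamma_k$ denotes the lower central series ($\Gamma_1(G)=G$, $\Gamma_{k+1}(G)=(\Gamma_k(G),G)$), and $\mathcal{A}_n(k)=\{\phi\in\mathrm{Aut}(F_n): g^{-1}\phi(g)\in\Gamma_{k+1}(F_n)\ \forall g\in F_n\}$; $IA_n=\mathcal{A}_n(1)$. $P\Sigma_n$ (the McCool group) is the subgroup of $\mathrm{Aut}(F_n)$ generated by the automorphisms $\xi_{i,j}$, $1\leq i\neq j\leq n$, where $\xi_{i,j}(x_i)=x_j^{-1}x_ix_j$ and $\xi_{i,j}(x_l)=x_l$ for $l\neq i$. The map $\tau_1^{(B)}$ is the composition $gr^1(B)\to (B\cap\mathcal{A}_n(1))/(B\cap\mathcal{A}_n(2))\hookrightarrow \mathcal{A}_n(1)/\mathcal{A}_n(2)=IA_n^{ab}$. *)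

(* Defs.v *)
From mathcomp Require Import all_boot.
Set Implicit Arguments. Unset Strict Implicit. Unset Printing Implicit Defensive.

Section FreeGroup.
Variable n : nat.

(* a letter (i, false) is x_i, (i, true) is x_i^{-1} *)
Definition letter := ('I_n * bool)%type.
Definition word := seq letter.
Definition linv (a : letter) : letter := (a.1, ~~ a.2).

Fixpoint reducedb (w : word) : bool :=
  match w with
  | a :: ((b :: _) as w') => (b != linv a) && reducedb w'
  | _ => true
  end.

Definition ccons (a : letter) (w : word) : word :=
  if w is b :: w' then (if b == linv a then w' else a :: w) else [:: a].
Definition reduce (w : word) : word := foldr ccons [::] w.

Definition fone : word := [::].
Definition fmul (u v : word) : word := reduce (u ++ v).
Definition finv (u : word) : word := rev (map linv u).
Definition fcomm (g h : word) : word := fmul (fmul (finv g) (finv h)) (fmul g h).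

Inductive fgen (S : word -> Prop) : word -> Prop :=
  | fgen_base w : S w -> fgen S w
  | fgen_one : fgen S fone
  | fgen_mul u v : fgen S u -> fgen S v -> fgen S (fmul u v)
  | fgen_inv u : fgen S u -> fgen S (finv u).

(* lcs k = Gamma_{k+1}(F_n); lcs 0 = F_n *)
Fixpoint lcs (k : nat) : word -> Prop :=
  match k with
  | 0 => fun w => reducedb w
  | k'.+1 => fgen (fun w => exists g h, lcs k' g /\ reducedb h /\ w = fcomm g h)
  end.
Definition Gamma (k : nat) := lcs k.-1.

Definition endo := {ffun 'I_n -> word}.
Definition lapp (phi : endo) (a : letter) : word :=
  if a.2 then finv (phi a.1) else phi a.1.
Definition app (phi : endo) (w : word) : word := reduce (flatten (map (lapp phi) w)).
Definition ecomp (phi psi : endo) : endo := [ffun i => app phi (psi i)].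
Definition eid : endo := [ffun i => [:: (i, false)]].
Definition reduced_endo (phi : endo) := forall i, reducedb (phi i).
Definition is_inverse (psi phi : endo) :=
  reduced_endo psi /\ ecomp phi psi = eid /\ ecomp psi phi = eid.
Definition is_aut (phi : endo) := reduced_endo phi /\ exists psi, is_inverse psi phi.

Inductive agen (S : endo -> Prop) : endo -> Prop :=
  | agen_base phi : S phi -> agen S phi
  | agen_one : agen S eid
  | agen_comp phi psi : agen S phi -> agen S psi -> agen S (ecomp phi psi)
  | agen_inv phi psi : agen S phi -> is_inverse psi phi -> agen S psi.

Definition xi (i j : 'I_n) : endo :=
  [ffun l => if l == i then [:: (j, true); (i, false); (j, false)] else [:: (l, false)]].

Definition PSigma : endo -> Prop := agen (fun phi => exists i j, i != j /\ phi = xi i j).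

Definition Andreadakis (k : nat) (phi : endo) :=
  is_aut phi /\ forall g, reducedb g -> Gamma k.+1 (fmul (finv g) (app phi g)).

Definition is_subgroup (B : endo -> Prop) :=
  B eid /\ (forall phi psi, B phi -> B psi -> B (ecomp phi psi)) /\
  (forall phi psi, B phi -> is_inverse psi phi -> B psi).

Definition DerivedSub (B : endo -> Prop) : endo -> Prop :=
  agen (fun chi => exists phi psi phi' psi',
          B phi /\ B psi /\ is_inverse phi' phi /\ is_inverse psi' psi /\
          chi = ecomp (ecomp phi' psi') (ecomp phi psi)).

(* injectivity of tau_1^(B) : B/Gamma_2(B) -> A_n(1)/A_n(2), phi Gamma_2(B) |-> phi A_n(2):
   phi A_n(2) = psi A_n(2) implies phi Gamma_2(B) = psi Gamma_2(B) *)
Definition tau1_injective (B : endo -> Prop) :=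
  forall phi psi phi', B phi -> B psi -> is_inverse phi' phi ->
    Andreadakis 2 (ecomp phi' psi) -> DerivedSub B (ecomp phi' psi).

End FreeGroup.

(* Main.v *)
From Pilot Require Import Defs.
From mathcomp Require Import all_boot.
From HB Require Import structures.
Set Implicit Arguments. Unset Strict Implicit. Unset Printing Implicit Defensive.
Notation finv := Pilot.Defs.finv.

Section Words.
Variable n : nat.
Implicit Types (a b : letter n) (u v w : word n).

Lemma linvK : involutive (@linv n).
Proof. by case=> i b; rewrite /linv /= negbK. Qed.

Definition radj (a b : letter n) := b != linv a.

Lemma reducedbE w : reducedb w = sorted radj w.
Proof.
case: w => // a w; elim: w a => //= b w IH a; by rewrite IH.
Qed.

Lemma reducedb_cons a w : reducedb (a :: w) -> reducedb w.
Proof. by case: w => //= b w /andP[]. Qed.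

Lemma ccons_reduced a w : reducedb w -> reducedb (ccons a w).
Proof.
case: w => [|b w] // H; rewrite /ccons. case: ifP => [_|Nb].
  exact: reducedb_cons H.
by rewrite -[reducedb (a :: _)]/((b != linv a) && reducedb (b :: w)) Nb H.
Qed.

Lemma reduce_reduced w : reducedb (reduce w).
Proof. by elim: w => //= a w IH; apply: ccons_reduced. Qed.

Lemma ccons_cancel a w : reducedb w -> ccons a (ccons (linv a) w) = w.
Proof.
case: w => [|b w] H; first by rewrite /= eqxx.
rewrite {2}/ccons; case: ifP => [/eqP Eb|Nb].
  subst b; case: w H => [|c w] H; first by rewrite /= linvK.
  case/andP: H => H _; rewrite /= !linvK in H *; by rewrite (negbTE H).
by rewrite /= eqxx.
Qed.

Lemma reduce_id w : reducedb w -> reduce w = w.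
Proof.
elim: w => //= a w IH H. rewrite IH ?(reducedb_cons H) //.
case: w H {IH} => //= b w /andP[H _]. by rewrite (negbTE H).
Qed.

Lemma foldr_ccons_reduced w u : reducedb w -> reducedb (foldr (@ccons n) w u).
Proof. by move=> H; elim: u => //= a u IH; apply: ccons_reduced. Qed.

Lemma foldr_ccons_reduce w u : reducedb w -> foldr (@ccons n) w (reduce u) = foldr (@ccons n) w u.
Proof.
move=> Hw; elim: u => //= a u IH.
rewrite -IH. have := reduce_reduced u.
case: (reduce u) => [|b r] //= Hr.
case: ifP => [/eqP Eb|_] //=. subst b.
by rewrite ccons_cancel // foldr_ccons_reduced // (reducedb_cons Hr).
Qed.

Lemma reduce_cat u v : reduce (u ++ v) = foldr (@ccons n) (reduce v) u.
Proof. by rewrite /reduce foldr_cat. Qed.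

Lemma reduce_catl u v : reduce (reduce u ++ v) = reduce (u ++ v).
Proof. by rewrite !reduce_cat foldr_ccons_reduce // reduce_reduced. Qed.

Lemma reduce_catr u v : reduce (u ++ reduce v) = reduce (u ++ v).
Proof. by rewrite !reduce_cat reduce_id // reduce_reduced. Qed.

Lemma finvK : involutive (@finv n).
Proof. by move=> u; rewrite /finv map_rev revK -map_comp map_id_in // => a _ /=; rewrite linvK. Qed.

Lemma finv_cons a u : finv (a :: u) = rcons (finv u) (linv a).
Proof. by rewrite /finv /= rev_cons. Qed.

Lemma finv_cat u v : finv (u ++ v) = finv v ++ finv u.
Proof. by rewrite /finv map_cat rev_cat. Qed.

Lemma foldr_cancel w u : reducedb w -> foldr (@ccons n) w (u ++ finv u) = w.
Proof.
elim: u w => //= a u IH w Hw.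
rewrite finv_cons -cats1 catA foldr_cat /= IH ?ccons_cancel //.
exact: ccons_reduced.
Qed.

Lemma reduce_cancel u v : reduce (u ++ finv u ++ v) = reduce v.
Proof. by rewrite catA reduce_cat foldr_cancel // reduce_reduced. Qed.

Lemma reduce_cancelV u v : reduce (finv u ++ u ++ v) = reduce v.
Proof. by rewrite -{2}(finvK u) reduce_cancel. Qed.

Lemma finv_reduced u : reducedb u -> reducedb (finv u).
Proof.
rewrite !reducedbE /finv rev_sorted sorted_map => H.
rewrite (eq_sorted (e' := radj)) // => a b.
by rewrite /relpre /radj /= linvK eq_sym.
Qed.

Definition A (phi : endo n) w := flatten (map (lapp phi) w).

Lemma appE phi w : app phi w = reduce (A phi w).
Proof. by []. Qed.

Lemma A_cons phi a w : A phi (a :: w) = lapp phi a ++ A phi w.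
Proof. by []. Qed.

Lemma A_cat phi u v : A phi (u ++ v) = A phi u ++ A phi v.
Proof. by rewrite /A map_cat flatten_cat. Qed.

Lemma lapp_linv phi a : lapp phi (linv a) = finv (lapp phi a).
Proof. by case: a => i [] //=; rewrite /lapp /= finvK. Qed.

Lemma app_cat phi u v : app phi (u ++ v) = fmul (app phi u) (app phi v).
Proof. by rewrite !appE /fmul A_cat reduce_catl reduce_catr. Qed.

Lemma A_ccons phi a r : reduce (A phi (ccons a r)) = reduce (lapp phi a ++ A phi r).
Proof.
case: r => [|b r] //=; case: ifP => [/eqP ->|_] //.
by rewrite A_cons lapp_linv reduce_cancel.
Qed.

Lemma app_reduce phi w : app phi (reduce w) = app phi w.
Proof.
rewrite !appE; elim: w => //= a w IH.
by rewrite A_ccons -reduce_catr IH reduce_catr.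
Qed.

Lemma app_fmul phi u v : app phi (fmul u v) = fmul (app phi u) (app phi v).
Proof. by rewrite /fmul app_reduce app_cat. Qed.

Lemma A_finv phi u : A phi (finv u) = finv (A phi u).
Proof.
elim: u => //= a u IH.
rewrite finv_cons -cats1 A_cat IH A_cons finv_cat; congr (_ ++ _).
by rewrite /A /= cats0 lapp_linv.
Qed.

Lemma reduce_finv (x : word n) : reduce (finv x) = finv (reduce x).
Proof.
transitivity (reduce (finv (reduce x) ++ reduce x ++ finv x)).
  by rewrite reduce_cancelV.
rewrite -reduce_catr reduce_catl -(cats0 (finv x)) reduce_cancel /= cats0.
by rewrite reduce_id // finv_reduced // reduce_reduced.
Qed.

Lemma app_finv phi u : app phi (finv u) = finv (app phi u).
Proof. by rewrite !appE A_finv reduce_finv. Qed.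

Lemma app_letter (phi : endo n) (i : 'I_n) : app phi [:: (i, false)] = reduce (phi i).
Proof. by rewrite /app /= cats0. Qed.

Lemma app_comp phi psi w : app (ecomp phi psi) w = app phi (app psi w).
Proof.
rewrite [app psi w]appE app_reduce; elim: w => // a w IH.
rewrite -[a :: w]/([:: a] ++ w) app_cat IH A_cons app_cat; congr fmul.
case: a => i [] /=; rewrite /lapp /=.
  rewrite app_finv appE /A /= cats0 /lapp /= ffunE reduce_id //.
  by rewrite finv_reduced // appE reduce_reduced.
by rewrite app_letter ffunE reduce_id // appE reduce_reduced.
Qed.

Lemma app_eid w : app (eid n) w = reduce w.
Proof.
rewrite /app; congr reduce; elim: w => //= a w ->.
by case: a => i [] //=; rewrite /lapp /= ffunE.
Qed.



End Words.


Definition FG (n : nat) := {w : word n | reducedb w}.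
HB.instance Definition _ n := Choice.on (FG n).

Section Grp.
Variable n : nat.
Implicit Types x y z : FG n.

Definition gmul x y : FG n := exist _ (fmul (val x) (val y)) (reduce_reduced _).
Definition ginv x : FG n := exist _ (finv (val x)) (finv_reduced (valP x)).
Definition gone : FG n := exist _ (fone n) isT.

Lemma gmulA : associative gmul.
Proof. by move=> x y z; apply: val_inj; rewrite /= /fmul reduce_catl reduce_catr catA. Qed.
Lemma gmul1 : left_id gone gmul.
Proof. by move=> x; apply: val_inj; rewrite /= /fmul /= reduce_id // (valP x). Qed.
Lemma gmul1r : right_id gone gmul.
Proof. by move=> x; apply: val_inj; rewrite /= /fmul /= cats0 reduce_id // (valP x). Qed.
Lemma gmulV : left_inverse gone ginv gmul.
Proof. by move=> x; apply: val_inj; rewrite /= /fmul -[finv _ ++ _]cats0 -catA reduce_cancelV. Qed.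
Lemma gmulVr : right_inverse gone ginv gmul.
Proof. by move=> x; apply: val_inj; rewrite /= /fmul -[_ ++ finv _]cats0 -catA reduce_cancel. Qed.
End Grp.

HB.instance Definition _ n := isGroup.Build (FG n) (@gmulA n) (@gmul1 n) (@gmul1r n) (@gmulV n) (@gmulVr n).

Open Scope group_scope.

Section Grp2.
Variable n : nat.
Implicit Types x y z : FG n.

Lemma valM x y : val (x * y) = fmul (val x) (val y). Proof. by []. Qed.
Lemma valV x : val (x^-1) = finv (val x). Proof. by []. Qed.
Lemma val1 : val (1 : FG n) = fone n. Proof. by []. Qed.

Lemma app_reduced (phi : endo n) w : reducedb (app phi w).
Proof. by rewrite appE reduce_reduced. Qed.

Definition happ (phi : endo n) x : FG n := exist _ (app phi (val x)) (app_reduced _ _).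

Lemma happM phi x y : happ phi (x * y) = happ phi x * happ phi y.
Proof. by apply: val_inj; rewrite /= app_fmul. Qed.
Lemma happV phi x : happ phi x^-1 = (happ phi x)^-1.
Proof. by apply: val_inj; rewrite /= app_finv. Qed.
Lemma happR phi x y : happ phi [~ x, y] = [~ happ phi x, happ phi y].
Proof. by rewrite commgEl conjgE !happM !happV. Qed.
Lemma happ_comp phi psi x : happ (ecomp phi psi) x = happ phi (happ psi x).
Proof. by apply: val_inj; rewrite /= app_comp. Qed.
Lemma happ_eid x : happ (eid n) x = x.
Proof. by apply: val_inj; rewrite /= app_eid reduce_id // (valP x). Qed.

Definition L k x := lcs k (val x).

Lemma fgen_reduced (S : word n -> Prop) w : (forall u, S u -> reducedb u) -> fgen S w -> reducedb w.
Proof.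
move=> HS; elim=> [u /HS //|//|u v _ _ _ _|u _ Hu]; first exact: reduce_reduced.
exact: finv_reduced.
Qed.

Lemma fcomm_reduced (g h : word n) : reducedb (fcomm g h).
Proof. exact: reduce_reduced. Qed.

Lemma lcs_reduced k (w : word n) : lcs k w -> reducedb w.
Proof.
case: k => //= k; apply: fgen_reduced => u [g [h [_ [_ ->]]]]; exact: fcomm_reduced.
Qed.

Lemma L_ind k (P : FG n -> Prop) : P 1 -> (forall x y, P x -> P y -> P (x * y)) ->
  (forall x, P x -> P x^-1) -> (forall x y, L k x -> P [~ x, y]) -> forall x, L k.+1 x -> P x.
Proof.
move=> P1 PM PV PC [w Hw]; rewrite /L /=.
move=> Hf; move: Hf Hw; elim=> [u [g [h [Hg [Hh ->]]]]|| u v Hu IHu Hv IHv| u Hu IHu] H.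
- have Hg' := lcs_reduced Hg.
  have -> : exist _ (fcomm g h) H = [~ (exist _ g Hg' : FG n), exist _ h Hh].
    by apply: val_inj; rewrite commgEl conjgE mulgA.
  exact: PC.
- by have -> : exist _ (fone n) H = (1 : FG n) by apply: val_inj.
- have Hu' : reducedb u by apply: fgen_reduced Hu => ? [g [h [_ [_ ->]]]]; apply: fcomm_reduced.
  have Hv' : reducedb v by apply: fgen_reduced Hv => ? [g [h [_ [_ ->]]]]; apply: fcomm_reduced.
  have -> : exist _ (fmul u v) H = (exist _ u Hu' : FG n) * exist _ v Hv' by apply: val_inj.
  by apply: PM; [apply: IHu|apply: IHv].
- have Hu' : reducedb u by apply: fgen_reduced Hu => ? [g [h [_ [_ ->]]]]; apply: fcomm_reduced.
  have -> : exist _ (finv u) H = (exist _ u Hu' : FG n)^-1 by apply: val_inj.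
  by apply: PV; apply: IHu.
Qed.

Lemma L1 k : L k (1 : FG n).
Proof. by case: k => //= k; apply: fgen_one. Qed.
Lemma LM k x y : L k x -> L k y -> L k (x * y).
Proof. case: k => [|k] Hx Hy; first exact: valP. exact: fgen_mul. Qed.
Lemma LV k x : L k x -> L k x^-1.
Proof. case: k => [|k] Hx; first exact: valP. exact: fgen_inv. Qed.
Lemma LR k x y : L k x -> L k.+1 [~ x, y].
Proof.
move=> Hx; apply: fgen_base; exists (val x), (val y); split => //; split; first exact: valP.
by rewrite commgEl conjgE mulgA.
Qed.
Lemma L0 x : L 0 x. Proof. exact: valP. Qed.

Lemma LJ k x y : L k x -> L k (x ^ y).
Proof.
elim: k x y => [|k IH] x y Hx; first exact: L0.
move: x Hx y; apply: (L_ind (P := fun x => forall y, L k.+1 (x ^ y))).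
- by move=> y; rewrite conj1g; apply: L1.
- by move=> x1 x2 H1 H2 y; rewrite conjMg; apply: LM.
- by move=> x1 H1 y; rewrite conjVg; apply: LV.
- by move=> x1 x2 H1 y; rewrite conjRg; apply: LR; apply: IH.
Qed.

Lemma Ldown k x : L k.+1 x -> L k x.
Proof.
apply: L_ind; [exact: L1|exact: LM|exact: LV|].
by move=> x1 y H; rewrite commgEl; apply: LM; [apply: LV|apply: LJ].
Qed.

Lemma Lhapp phi k x : L k x -> L k (happ phi x).
Proof.
elim: k x => [|k IH] x Hx; first exact: L0.
move: x Hx; apply: L_ind.
- have -> : happ phi 1 = (1 : FG n) by apply: val_inj. exact: L1.
- by move=> x1 x2 H1 H2; rewrite happM; apply: LM.
- by move=> x1 H1; rewrite happV; apply: LV.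
- by move=> x1 x2 H1; rewrite happR; apply: LR; apply: IH.
Qed.

End Grp2.


Ltac gsimp := rewrite ?commgEl ?conjgE ?invgM ?invgK ?mulgA;
  repeat progress rewrite ?mulgK ?mulgVK ?mulgV ?mulVg ?mulg1 ?mul1g.

Section Main.
Variable n : nat.
Implicit Types x y z : FG n.

Definition eqm x y := L 2 (x^-1 * y).

Lemma eqm_refl x : eqm x x.
Proof. by rewrite /eqm mulVg; apply: L1. Qed.
Lemma eqm_sym x y : eqm x y -> eqm y x.
Proof. rewrite /eqm => H; have -> : y^-1 * x = (x^-1 * y)^-1 by rewrite invgM invgK. by apply: LV. Qed.
Lemma eqm_trans x y z : eqm x y -> eqm y z -> eqm x z.
Proof. rewrite /eqm => H1 H2; have -> : x^-1 * z = (x^-1 * y) * (y^-1 * z) by gsimp. by apply: LM. Qed.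
Lemma eqmM x x' y y' : eqm x x' -> eqm y y' -> eqm (x * y) (x' * y').
Proof.
rewrite /eqm => H1 H2.
have -> : (x * y)^-1 * (x' * y') = (x^-1 * x') ^ y * (y^-1 * y').
  by gsimp.
by apply: LM => //; apply: LJ.
Qed.
Lemma eqmV x y : eqm x y -> eqm x^-1 y^-1.
Proof.
rewrite /eqm => H; rewrite invgK.
have -> : x * y^-1 = ((x^-1 * y)^-1) ^ y^-1 by gsimp.
by apply: LJ; apply: LV.
Qed.
Lemma eqm1 c : L 2 c -> eqm c 1.
Proof. by move=> H; rewrite /eqm mulg1; apply: LV. Qed.

Lemma cent a z : L 1 a -> eqm (a * z) (z * a).
Proof.
move=> H; rewrite /eqm.
have -> : (a * z)^-1 * (z * a) = [~ a, z]^-1 by gsimp.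
by apply: LV; apply: LR.
Qed.

Lemma conj_eqm a z : L 1 a -> eqm (z ^ a) z.
Proof.
move=> H; rewrite /eqm; have -> : (z ^ a)^-1 * z = [~ a, z] by gsimp.
exact: LR.
Qed.

Lemma commMg x y z : [~ x * y, z] = [~ x, z] ^ y * [~ y, z].
Proof. by gsimp. Qed.
Lemma commgM x y z : [~ x, y * z] = [~ x, z] * [~ x, y] ^ z.
Proof. by gsimp. Qed.

Definition IA k (phi : endo n) := forall x : FG n, L k (x^-1 * happ phi x).

Lemma happ1 phi : happ phi 1 = 1 :> FG n.
Proof. by apply: val_inj. Qed.

Lemma split_happ phi x : happ phi x = x * (x^-1 * happ phi x).
Proof. by gsimp. Qed.

Lemma IA1_L2 phi y0 : IA 1 phi -> L 1 y0 -> eqm y0 (happ phi y0).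
Proof.
move=> Hphi; apply: (@L_ind n 0 (fun y => eqm y (happ phi y))).
- by rewrite happ1; apply: eqm_refl.
- by move=> x1 x2 H1 H2; rewrite happM; apply: eqmM.
- by move=> x1 H1; rewrite happV; apply: eqmV.
move=> x y _; rewrite happR (split_happ phi x) (split_happ phi y).
set a := x^-1 * happ phi x; set b := y^-1 * happ phi y.
have Ha : L 1 a := Hphi x. have Hb : L 1 b := Hphi y.
rewrite commMg commgM.
apply: eqm_sym; apply: eqm_trans (_ : eqm ([~ x, b] * [~ x, y] ^ b) _).
  rewrite -commgM -[X in eqm _ X]mulg1; apply: eqmM; first exact: conj_eqm.
  by apply: eqm1; apply: LR.
rewrite -[X in eqm _ X]mul1g; apply: eqmM; last exact: conj_eqm.
apply: eqm1; have -> : [~ x, b] = [~ b, x]^-1 by gsimp.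
by apply: LV; apply: LR.
Qed.

Lemma IA1_comm P S x : IA 1 P -> IA 1 S -> eqm (happ S (happ P x)) (happ P (happ S x)).
Proof.
move=> HP HS.
have Ha : L 1 (x^-1 * happ P x) := HP x. have Hb : L 1 (x^-1 * happ S x) := HS x.
set a := x^-1 * happ P x in Ha *; set b := x^-1 * happ S x in Hb *.
have EP : happ P x = x * a by rewrite /a; gsimp.
have ES : happ S x = x * b by rewrite /b; gsimp.
clearbody a b; rewrite EP ES !happM EP ES.
apply: eqm_trans (_ : eqm (x * b * a) _).
  apply: eqmM (eqm_refl _) _; apply: eqm_sym; exact: IA1_L2.
apply: eqm_trans (_ : eqm (x * a * b) _); last first.
  apply: eqmM (eqm_refl _) _; exact: IA1_L2.
rewrite -!mulgA; apply: eqmM (eqm_refl _) _; apply: eqm_sym; exact: cent.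
Qed.

Lemma inv_pt (a b : endo n) : ecomp a b = eid n -> forall z, happ a (happ b z) = z.
Proof. by move=> E z; rewrite -happ_comp E happ_eid. Qed.

Lemma IA2_comm phi psi phi' psi' : IA 1 phi -> IA 1 psi -> is_inverse phi' phi ->
  is_inverse psi' psi -> IA 2 (ecomp (ecomp phi' psi') (ecomp phi psi)).
Proof.
move=> H1 H2 [_ [_ E1]] [_ [_ E2]] x; rewrite !happ_comp.
have Hc := IA1_comm x H1 H2.
set y := happ phi (happ psi x).
have -> : y = happ psi (happ phi x) * ((happ psi (happ phi x))^-1 * y) by gsimp.
move: Hc; rewrite /eqm -/y; set c := _ * y; clearbody c => Hc.
rewrite !happM (inv_pt E2) (inv_pt E1) mulKg.
by apply: Lhapp; apply: Lhapp.
Qed.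

Lemma IA_comp k phi psi : IA k phi -> IA k psi -> IA k (ecomp phi psi).
Proof.
move=> H1 H2 x; rewrite happ_comp.
have -> : x^-1 * happ phi (happ psi x) =
  (x^-1 * happ psi x) * ((happ psi x)^-1 * happ phi (happ psi x)) by gsimp.
exact: LM.
Qed.

Lemma IA_inv k phi psi : IA k phi -> ecomp phi psi = eid n -> IA k psi.
Proof.
move=> H E x; have Ex := inv_pt E x.
have -> : x^-1 * happ psi x = ((happ psi x)^-1 * happ phi (happ psi x))^-1 by rewrite Ex; gsimp.
exact: LV.
Qed.

Lemma IA_eid k : IA k (eid n).
Proof. by move=> x; rewrite happ_eid mulVg; apply: L1. Qed.

Definition ltr (a : letter n) : FG n := exist _ [:: a] isT.
Definition X (i : 'I_n) := ltr (i, false).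

Lemma IA_gen k phi : (forall i, L k ((X i)^-1 * happ phi (X i))) -> IA k phi.
Proof.
move=> H [w Hw]; elim: w Hw => [|a w IH] Hw.
  have -> : exist _ [::] Hw = (1 : FG n) by apply: val_inj.
  by rewrite happ1 mulg1; apply: L1.
have Hw' := reducedb_cons Hw.
have -> : exist _ (a :: w) Hw = ltr a * exist _ w Hw'.
  by apply: val_inj; exact: (esym (reduce_id Hw)).
set y : FG n := exist _ w Hw'; rewrite happM.
have -> : (ltr a * y)^-1 * (happ phi (ltr a) * happ phi y) =
   ((ltr a)^-1 * happ phi (ltr a)) ^ y * (y^-1 * happ phi y) by gsimp.
apply: LM; last exact: IH.
apply: LJ; case: a {Hw Hw' IH y} => i [] ; last exact: H.
have -> : ltr (i, true) = (X i)^-1 by apply: val_inj.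
rewrite happV.
have -> : ((X i)^-1)^-1 * (happ phi (X i))^-1 = (((X i)^-1 * happ phi (X i))^-1) ^ (X i)^-1 by gsimp.
by apply: LJ; apply: LV.
Qed.

Lemma happ_X (phi : endo n) l (g : FG n) : phi l = val g -> happ phi (X l) = g.
Proof. by move=> E; apply: val_inj; rewrite /= app_letter E reduce_id // (valP g). Qed.

Lemma ecomp_eid_of (a b : endo n) : (forall l, happ a (happ b (X l)) = X l) -> ecomp a b = eid n.
Proof.
move=> H; apply/ffunP => l; rewrite !ffunE.
have := congr1 val (H l); rewrite /= app_letter app_reduce => ->.
by [].
Qed.

Lemma ecompA (a b c : endo n) : ecomp (ecomp a b) c = ecomp a (ecomp b c).
Proof. by apply/ffunP => l; rewrite !ffunE app_comp. Qed.

Lemma ecomp_eidl (phi : endo n) : reduced_endo phi -> ecomp (eid n) phi = phi.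
Proof. by move=> H; apply/ffunP => l; rewrite !ffunE app_eid reduce_id. Qed.

Lemma eid_reduced : reduced_endo (eid n).
Proof. by move=> l; rewrite ffunE. Qed.

Lemma ecomp_reduced (a b : endo n) : reduced_endo (ecomp a b).
Proof. by move=> l; rewrite ffunE app_reduced. Qed.

Lemma Andreadakis_iff k phi : Andreadakis k phi <-> is_aut phi /\ IA k phi.
Proof.
split=> [[Ha H]|[Ha H]]; split => //.
  by move=> x; apply: (H _ (valP x)).
by move=> g Hg; apply: (H (exist _ g Hg)).
Qed.

End Main.


Section XI.
Variable n : nat.
Variables i j : 'I_n.
Hypothesis ij : i != j.

Lemma red3 (b : bool) : reducedb [:: (j, b); (i, false); (j, ~~ b)].
Proof.
rewrite /= /linv /= andbT; apply/andP; split; apply/negP => /eqP [] E; move: ij; rewrite ?E eqxx //.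
Qed.

Definition xiinv : endo n :=
  [ffun l => if l == i then [:: (j, false); (i, false); (j, true)] else [:: (l, false)]].

Lemma xi_reduced : reduced_endo (xi i j).
Proof. by move=> l; rewrite ffunE; case: ifP => // _; apply: (red3 true). Qed.
Lemma xiinv_reduced : reduced_endo xiinv.
Proof. by move=> l; rewrite ffunE; case: ifP => // _; apply: (red3 false). Qed.

Lemma happ_xi_i : happ (xi i j) (X i) = (X j)^-1 * X i * X j.
Proof.
apply: happ_X; rewrite ffunE eqxx !valM valV /fmul reduce_catl.
exact: (esym (reduce_id (red3 true))).
Qed.

Lemma happ_xi_l l : l != i -> happ (xi i j) (X l) = X l.
Proof. by move=> H; apply: happ_X; rewrite ffunE (negbTE H). Qed.

Lemma happ_xiinv_i : happ xiinv (X i) = X j * X i * (X j)^-1.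
Proof.
apply: happ_X; rewrite ffunE eqxx !valM valV /fmul reduce_catl.
exact: (esym (reduce_id (red3 false))).
Qed.

Lemma happ_xiinv_l l : l != i -> happ xiinv (X l) = X l.
Proof. by move=> H; apply: happ_X; rewrite ffunE (negbTE H). Qed.

Lemma xi_IA1 : IA 1 (xi i j).
Proof.
apply: IA_gen => l; case: (eqVneq l i) => [->|H].
  rewrite happ_xi_i; have -> : (X i)^-1 * ((X j)^-1 * X i * X j) = [~ X i, X j] by gsimp.
  by apply: LR; apply: L0.
by rewrite happ_xi_l // mulVg; apply: L1.
Qed.

Lemma xi_aut : is_aut (xi i j).
Proof.
split; first exact: xi_reduced.
exists xiinv; split; first exact: xiinv_reduced.
have ji : j != i by rewrite eq_sym.
split; apply: ecomp_eid_of => l; case: (eqVneq l i) => [->|H].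
- rewrite happ_xiinv_i !happM happV happ_xi_i !happ_xi_l //; by gsimp.
- by rewrite !happ_xiinv_l // happ_xi_l.
- rewrite happ_xi_i !happM happV happ_xiinv_i !happ_xiinv_l //; by gsimp.
- by rewrite !happ_xi_l // happ_xiinv_l.
Qed.

End XI.


Section Fin.
Variable n : nat.

Lemma PSigma_aut (phi : endo n) : PSigma phi -> is_aut phi.
Proof.
elim=> [f [i [j [ij ->]]]||a b _ [Ra [a' [Ra' [Ea1 Ea2]]]] _ [Rb [b' [Rb' [Eb1 Eb2]]]]|a b _ [Ra _] [Rb [E1 E2]]].
- exact: xi_aut.
- split; first exact: eid_reduced.
  exists (eid n); split; first exact: eid_reduced.
  by rewrite ecomp_eidl; last exact: eid_reduced.
- split; first exact: ecomp_reduced.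
  exists (ecomp b' a'); split; first exact: ecomp_reduced.
  split; apply: ecomp_eid_of => l; rewrite !happ_comp.
    by rewrite (inv_pt Eb1) (inv_pt Ea1).
  by rewrite (inv_pt Ea2) (inv_pt Eb2).
- split => //; exists a; split => //.
Qed.

Lemma PSigma_IA1 (phi : endo n) : PSigma phi -> IA 1 phi.
Proof.
elim=> [f [i [j [ij ->]]]||a b _ Ha _ Hb|a b _ Ha [Rb [E1 E2]]].
- exact: xi_IA1.
- exact: IA_eid.
- exact: IA_comp.
- exact: IA_inv E1.
Qed.

End Fin.

Close Scope group_scope.

Theorem proposition2p2p7 (n : nat) (Hn : 2 <= n) (B : endo n -> Prop) :
  is_subgroup B -> (forall phi, B phi -> PSigma phi) -> tau1_injective B ->
  forall phi, (Andreadakis 2 phi /\ B phi) <-> DerivedSub B phi.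
Proof.
move=> [B1 [BM BV]] HBP Htau phi; split.
  move=> [HA HB]; have Hr : reduced_endo phi by case: HA => [[]].
  rewrite -(ecomp_eidl Hr); apply: (Htau (eid n)) => //.
    split; first exact: eid_reduced.
    by rewrite ecomp_eidl; last exact: eid_reduced.
  by rewrite ecomp_eidl.
move=> HD.
have HB : B phi.
  elim: HD => [c [f [g [f' [g' [Bf [Bg [If [Ig ->]]]]]]]]||a b _ Ha _ Hb|a b _ Ha Ib].
  - apply: (BM); apply: (BM) => //. exact: (BV _ _ Bf If). exact: (BV _ _ Bg Ig).
  - exact: B1.
  - exact: BM.
  - exact: BV Ib.
split => //; apply/Andreadakis_iff; split; first by apply: PSigma_aut; apply: HBP.
elim: HD => [c [f [g [f' [g' [Bf [Bg [If [Ig ->]]]]]]]]||a b _ Ha _ Hb|a b _ Ha [_ [E1 _]]].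
- by apply: IA2_comm => //; apply: PSigma_IA1; apply: HBP.
- exact: IA_eid.
- exact: IA_comp.
- exact: IA_inv E1.
Qed.
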